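(* For every $n\ge 4$, the vertex of $\mathrm{PYR}(n)$ corresponding to the pyramidal tour with code $\langle 1,1,\dots,1\rangle$ and the vertex corresponding to the pyramidal tour with code $\langle 0,0,\dots,0\rangle$ are each adjacent to every other vertex of $\mathrm{PYR}(n)$.
   Context: Let $K_n$ be the complete undirected graph on vertex set $\{1,\dots,n\}$ with edge set $E$. A Hamiltonian cycle $\langle 1,i_1,\dots,i_r,n,j_1,\dots,j_{n-r-2}\rangle$ is called a pyramidal tour if $i_1<i_2<\dots<i_r$ and $j_1>j_2>\dots>j_{n-r-2}$; tours are undirected. Let $PT_n$ be the set of all pyramidal tours. For $x\in PT_n$ its characteristic vector $x^v\in\mathbb{R}^E$ has $x^v_e=1$ if edge $e$ lies in $x$ and $0$ otherwise. The pyramidal tours polytope is $\mathrm{PYR}(n)=\operatorname{conv}\{x^v : x\in PT_n\}$. Every pyramidal tour contains the edge $\{1,2\}$; the tour is oriented so that vertex $2$ belongs to the increasing part. The code of $x$ is the $0/1$ vector $x^c=(x^c_3,\dots,x^c_{n-1})$ with $x^c_i=1$ if vertex $i$ is visited in the increasing part of $x$ and $x^c_i=0$ otherwise; $x\mapsto x^c$ is a bijection from $PT_n$ onto $\{0,1\}^{n-3}$. Two vertices are adjacent if the segment joining them is a one-dimensional face of the polytope. *)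

(* Defs.v *)
From HB Require Import structures.
From mathcomp Require Import all_boot all_order all_algebra.
Set Implicit Arguments. Unset Strict Implicit. Unset Printing Implicit Defensive.
Import Order.TTheory GRing.Theory Num.Theory.

(* Vertices of K_n are the naturals 1..n.
   Edge set E of K_n: pairs (i,j) with 1 <= i < j <= n, representing {i,j}. *)
Definition edge (n : nat) : finType :=
  {p : 'I_n.+1 * 'I_n.+1 | (0 < val p.1) && (val p.1 < val p.2)}.

Definition pyr_seq (n : nat) (a b : seq nat) : seq nat := 1 :: a ++ n :: b.

Definition is_pyramidal (n : nat) (a b : seq nat) : Prop :=
  [/\ sorted ltn a, sorted (fun x y => y < x) b &
      perm_eq (pyr_seq n a b) (iota 1 n)].

Definition PT (n : nat) (s : seq nat) : Prop :=
  exists a b, s = pyr_seq n a b /\ is_pyramidal n a b.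

Definition cyc_pairs (s : seq nat) : seq (nat * nat) := zip s (rot 1 s).

Definition edge_in (n : nat) (s : seq nat) (e : edge n) : bool :=
  has (fun uv : nat * nat =>
         ((uv.1 == val (val e).1) && (uv.2 == val (val e).2)) ||
         ((uv.1 == val (val e).2) && (uv.2 == val (val e).1)))
      (cyc_pairs s).

Definition charvec (R : realFieldType) (n : nat) (s : seq nat)
  : {ffun edge n -> R} := [ffun e => if edge_in s e then 1%R else 0%R].

Definition dotE (R : realFieldType) (n : nat) (c x : {ffun edge n -> R}) : R :=
  (\sum_(e : edge n) c e * x e)%R.

(* The vertex set generating PYR(n) = conv {x^v : x in PT_n}. *)
Definition PYRgen (R : realFieldType) (n : nat) (x : {ffun edge n -> R}) : Prop :=
  exists s, PT n s /\ x = charvec R n s.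

(* Adjacency in conv(V): the segment [p,q] (p <> q, p,q in V) is a
   one-dimensional face of conv(V).  Faces of a polytope are exposed, and the
   exposed face of conv(V) for the objective c is conv{r in V | c.r = max}; so
   [p,q] is a face iff some c is maximised over V at p and q and every maximiser
   r in V lies on the segment [p,q]. *)
Definition adjacent (R : realFieldType) (n : nat)
  (V : {ffun edge n -> R} -> Prop) (p q : {ffun edge n -> R}) : Prop :=
  [/\ V p, V q, p <> q &
   exists c : {ffun edge n -> R},
     [/\ dotE c p = dotE c q,
         (forall r, V r -> (dotE c r <= dotE c p)%R) &
         (forall r, V r -> dotE c r = dotE c p ->
            exists t : R, [/\ (0 <= t)%R, (t <= 1)%R &
              r = [ffun e => (1 - t) * p e + t * q e]%R])]].

(* Oriented pyramidal tour <1,a,n,b> with vertex 2 in the increasing part;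
   its code is (x_3,...,x_{n-1}) with x_i = (i \in a). *)
Definition code_all (n : nat) (a : seq nat) (bit : bool) : Prop :=
  forall i, 3 <= i <= n.-1 -> (i \in a) = bit.

Arguments charvec R n s : clear implicits.
Arguments PYRgen R n x : clear implicits.
Arguments adjacent R n V p q : clear implicits.

(* Main.v *)
Require Import Defs.
From HB Require Import structures.
From mathcomp Require Import all_boot all_order all_algebra.
From mathcomp Require Import zify.
Set Implicit Arguments. Unset Strict Implicit. Unset Printing Implicit Defensive.
Import Order.TTheory GRing.Theory Num.Theory.


Ltac arith_revert :=
  repeat match goal with
  | H : is_true (leq _ _) |- _ => revert H
  | H : is_true (andb (leq _ _) (leq _ _)) |- _ => revert H
  | H : @eq ?T _ _ |- _ => unify T nat; revert H
  | H : andb (leq _ _) (leq _ _) = true |- _ => revert H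
  | H : leq _ _ = true |- _ => revert H
  | H : is_true (negb (@eq_op _ ?x _)) |- _ => let T := type of x in unify T nat; revert H
  | H : ~ (@eq ?T _ _) |- _ => unify T nat; revert H
  end.
Ltac qlia := arith_revert; repeat match goal with H : _ |- _ => clear H end; intros; lia.

Definition PE (n : nat) (L : pred nat) (i j : nat) : bool :=
  [&& (i == 1) || L i, (j == n) || L j & all (predC L) (index_iota i.+1 j)].
Definition compl (n : nat) (L : pred nat) : pred nat := fun k => (1 < k < n) && ~~ L k.
Definition Eb n L i j := PE n L i j || PE n (compl n L) i j.
Definition OKp n (L : pred nat) := forall k, L k -> 1 < k < n.

Lemma PE_between n L i j m : PE n L i j -> i < m < j -> ~~ L m.
Proof.
case/and3P=> _ _ /allP H hm; apply: (H m); rewrite mem_index_iota; lia.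
Qed.

Lemma PE_intro n L i j : (i == 1) || L i -> (j == n) || L j ->
  (forall m, i < m < j -> ~~ L m) -> PE n L i j.
Proof.
move=> h1 h2 h3; apply/and3P; split=> //; apply/allP=> m.
rewrite mem_index_iota => hm; apply: h3; lia.
Qed.

Lemma pred_ex (L : pred nat) k : 1 < k ->
  exists u, [/\ 0 < u < k, (u == 1) || L u & forall m, u < m < k -> ~~ L m].
Proof.
case: k => [|[|k]] // _; elim: k => [|k [u [h1 h2 h3]]].
  by exists 1; split=> // m; lia.
case Lk: (L k.+2).
  by exists k.+2; split; [lia | rewrite Lk orbT | move=> m; lia].
exists u; split=> //; first lia.
move=> m hm; case: (ltnP m k.+2) => hmk; first by apply: h3; lia.
have -> : m = k.+2 by lia.
by rewrite Lk.
Qed.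

Lemma succ_ex n (L : pred nat) k : k < n ->
  exists w, [/\ k < w <= n, (w == n) || L w & forall m, k < m < w -> ~~ L m].
Proof.
move=> hk; have [d hd] : exists d, n = k + d.+1 by exists (n - k).-1; lia.
elim: d k hk hd => [|d IH] k hk hd.
  by exists n; split; [lia | rewrite eqxx | move=> m; lia].
case Lk: (L k.+1).
  by exists k.+1; split; [lia | rewrite Lk orbT | move=> m; lia].
have [w [h1 h2 h3]] := IH k.+1 ltac:(lia) ltac:(lia).
exists w; split=> //; first lia.
move=> m hm; case: (ltnP k.+1 m) => hmk; first by apply: h3; lia.
have -> : m = k.+1 by lia.
by rewrite Lk.
Qed.

Section Comb.
Variables (n : nat) (A Y P : pred nat).
Hypotheses (hn : 3 < n) (okA : OKp n A) (okY : OKp n Y) (okP : OKp n P)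
  (A2 : A 2) (Y2 : Y 2) (P2 : P 2).

Lemma concl_step k u w :
  2 < k < n -> (forall m, 1 < m < k -> A m = Y m) -> u < k < w ->
  PE n (if A k then compl n A else A) u w -> Eb n Y u w -> A k = Y k.
Proof.
move=> hk agr huw; case Ak: (A k) => hPE hY.
  case/orP: hY => hY.
    case/and3P: (hY) => /orP [/eqP u1|Yu] _ _.
      by move: (PE_between hY (m := 2)); rewrite Y2; move/(_ ltac:(lia)).
    case/and3P: hPE => /orP [/eqP u1|cu] _ _; first by subst u; move: (okY Yu); lia.
    move: cu; rewrite /compl => /andP [hu nAu]; rewrite agr ?Yu // in nAu; lia.
  have := PE_between hY (m := k); rewrite /compl; move/(_ ltac:(lia)).
  by rewrite negb_and negbK; case/orP=> //; lia.
case/and3P: (hPE) => /orP [/eqP u1|Au] _ _.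
  by subst u; move: (PE_between hPE (m := 2)); rewrite A2; move/(_ ltac:(lia)).
have hu := okA Au; have Yu : Y u by rewrite -agr //; lia.
case/orP: hY => hY; first by apply/esym/negbTE; apply: (PE_between hY); lia.
case/and3P: hY => /orP [/eqP u1|cu] _ _; first lia.
by move: cu; rewrite /compl Yu andbF.
Qed.

Lemma main_step bit k :
  (forall k, 2 < k < n -> P k = bit) ->
  (exists2 k0, 2 < k0 < n & A k0 != P k0) ->
  (forall i j, 0 < i < j -> j <= n -> Eb n A i j -> Eb n P i j || Eb n Y i j) ->
  2 < k < n -> (forall m, 1 < m < k -> A m = Y m) -> A k = Y k.
Proof.
move=> hP [k0 hk0 nk0] hE hk agr.
set L := if A k then compl n A else A.
have nLk : ~~ L k by rewrite /L /compl; case Ak: (A k) => //=; rewrite ?Ak ?andbF.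
have [u [hu1 hu2 hu3]] := pred_ex L (k := k) ltac:(qlia).
have [w [hw1 hw2 hw3]] := succ_ex L (n := n) (k := k) ltac:(qlia).
have hPE : PE n L u w.
  apply: PE_intro => // m hm.
  case: (ltngtP m k) => hmk; [apply: hu3 | apply: hw3 | by subst m]; qlia.
have EA : Eb n A u w by rewrite /Eb; move: hPE; rewrite /L; case: (A k) => ->; rewrite ?orbT.
have := hE u w ltac:(qlia) ltac:(qlia) EA; case/orP => hY; last by apply: (concl_step _ agr _ hPE hY); qlia.
exfalso.
case: bit hP => hP.
-
  case/orP: hY => hY.
    by move: (PE_between hY (m := k)); rewrite hP //; move/(_ ltac:(qlia)).
  have ncP : forall m, compl n P m = false.
    move=> m; rewrite /compl; case h: (1 < m < n) => //=.
    have [->|m2] : m = 2 \/ 2 < m < n by qlia.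
      by rewrite P2.
    by rewrite hP.
  case/and3P: hY => /orP [/eqP u1|]; last by rewrite ncP.
  move=> /orP [/eqP wn|]; last by rewrite ncP.
  move=> _; subst u w; move: hPE; rewrite /L; case Ak: (A k) => hPE.
    have := PE_between hPE (m := k0); rewrite /compl; move/(_ ltac:(qlia)).
    rewrite negb_and negbK; case/orP; first qlia.
    by move=> Ak0; move: nk0; rewrite Ak0 hP.
  by move: (PE_between hPE (m := 2)); rewrite A2; move/(_ ltac:(qlia)).
-
  case/orP: hY => hY; last first.
    move: (PE_between hY (m := k)); rewrite /compl hP ?andbT //; move/(_ ltac:(qlia)).
    qlia.
  have nPw : forall m, k < m -> P m = false.
    move=> m hm; case Pm: (P m) => //; have := okP Pm => hm'.
    by move: Pm; rewrite hP //; qlia.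
  case/and3P: (hY) => /orP [/eqP u1|Pu] /orP [/eqP wn|Pw] _.
  + subst u w. by move: (PE_between hY (m := 2)); rewrite P2; move/(_ ltac:(qlia)).
  + by have := nPw w ltac:(qlia); rewrite Pw.
  2: by have := nPw w ltac:(qlia); rewrite Pw.
  subst w.
  have u2 : u = 2.
    have := okP Pu; case: (u =P 2) => // /eqP u2 hu.
    by move: Pu; rewrite hP //; qlia.
  subst u; move: hPE; rewrite /L; case Ak: (A k) => hPE.
    by case/and3P: hPE => /orP [//|]; rewrite /compl A2 andbF.
  move: (PE_between hPE (m := k0)); rewrite /compl; move/(_ ltac:(qlia)).
  by move: nk0; rewrite hP //; case: (A k0).
Qed.

Lemma comb bit :
  (forall k, 2 < k < n -> P k = bit) ->
  (forall i j, 0 < i < j -> j <= n -> Eb n A i j -> Eb n P i j || Eb n Y i j) ->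
  (forall k, A k = P k) \/ (forall k, A k = Y k).
Proof.
move=> hP hE.
have ext : forall Z, OKp n Z -> Z 2 -> (forall k, 2 < k < n -> A k = Z k) -> forall k, A k = Z k.
  move=> Z okZ Z2 h k; case: (ltnP 2 k) => hk.
    case: (ltnP k n) => hkn; first by apply: h; qlia.
    case Ak: (A k); first by have := okA Ak; qlia.
    by case Zk: (Z k) => //; have := okZ _ Zk; qlia.
  case: (k =P 2) => [->|/eqP k2]; first by rewrite A2 Z2.
  case Ak: (A k); first by have := okA Ak; qlia.
  by case Zk: (Z k) => //; have := okZ _ Zk; qlia.
case: (boolP (all (fun k => A k == P k) (index_iota 3 n))) => hall.
  left; apply: ext => // k hk; apply/eqP; move/allP: hall; apply; rewrite mem_index_iota; qlia.
right; apply: ext => //.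
have [k0 hk0 nk0] : exists2 k0, 2 < k0 < n & A k0 != P k0.
  move/allPn: hall => [k0]; rewrite mem_index_iota => hk0 nk0; exists k0 => //; qlia.
suff H : forall d k, 1 < k < n -> k <= d -> A k = Y k.
  by move=> k hk; apply: (H k); qlia.
elim=> [|d IH] k hk hkd; first qlia.
case: (ltnP k d.+1) => hkd'; first by apply: IH; qlia.
case: (k =P 2) => [->|/eqP k2]; first by rewrite A2 Y2.
apply: (main_step hP (ex_intro2 _ _ k0 hk0 nk0) hE); first qlia.
move=> m hm; apply: IH; qlia.
Qed.
End Comb.


Definition e1 n (e : edge n) : nat := val (val e).1.
Definition e2 n (e : edge n) : nat := val (val e).2.

Lemma e_bounds n (e : edge n) : 0 < e1 e < e2 e /\ e2 e <= n.
Proof.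
case: e => [[x y] /= hxy]; move/andP: (hxy) => [h1 h2]; rewrite /e1 /e2 /=.
have := ltn_ord y; qlia.
Qed.

Lemma edge_eq n (x y : edge n) : e1 x = e1 y -> e2 x = e2 y -> x = y.
Proof.
case: x => [[x1 x2] px]; case: y => [[y1 y2] py]; rewrite /e1 /e2 /= => h1 h2.
apply: val_inj => /=; congr pair; exact: val_inj.
Qed.

Lemma mk_aux1 n i j : i < j -> j <= n -> i < n.+1. Proof. qlia. Qed.
Lemma mk_aux2 n j : j <= n -> j < n.+1. Proof. qlia. Qed.
Definition mk_edge n i j (hi : 0 < i) (hij : i < j) (hj : j <= n) : edge n :=
  exist _ (@Ordinal n.+1 i (mk_aux1 hij hj), @Ordinal n.+1 j (mk_aux2 hj)) (introT andP (conj hi hij)).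

Lemma mk_edge_e1 n i j hi hij hj : e1 (@mk_edge n i j hi hij hj) = i. Proof. reflexivity. Qed.
Lemma mk_edge_e2 n i j hi hij hj : e2 (@mk_edge n i j hi hij hj) = j. Proof. reflexivity. Qed.

Lemma PE_uniq_l n L i i' j : PE n L i j -> PE n L i' j -> 0 < i < j -> 0 < i' < j -> i = i'.
Proof.
have H : forall a b, PE n L a j -> PE n L b j -> 0 < a -> a < b < j -> False.
  move=> a b ha hb a0 hab; case/and3P: (hb) => /orP [/eqP b1|Lb] _ _; first qlia.
  by move: (PE_between ha hab); rewrite Lb.
move=> h h' hi hi'; case: (ltngtP i i') => // hlt; exfalso.
  by apply: (H i i'); rewrite ?hlt //; qlia.
by apply: (H i' i); rewrite ?hlt //; qlia.
Qed.

Lemma PE_uniq_r n L i j j' : PE n L i j -> PE n L i j' -> i < j <= n -> i < j' <= n -> j = j'.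
Proof.
have H : forall a b, PE n L i a -> PE n L i b -> b <= n -> i < a < b -> False.
  move=> a b ha hb bn hab; case/and3P: (ha) => _ /orP [/eqP a1|La] _; first qlia.
  by move: (PE_between hb hab); rewrite La.
move=> h h' hj hj'; case: (ltngtP j j') => // hlt; exfalso.
  by apply: (H j j'); rewrite ?hlt //; qlia.
by apply: (H j' j); rewrite ?hlt //; qlia.
Qed.

Lemma count_edges n (A : pred nat) : 2 < n -> OKp n A ->
  #|[pred e : edge n | Eb n A (e1 e) (e2 e)]| = n.
Proof.
move=> hn okA.
pose g (e : edge n) : 'I_n.+1 := if PE n A (e1 e) (e2 e) then (val e).2 else (val e).1.
have ginj : {in [pred e : edge n | Eb n A (e1 e) (e2 e)] &, injective g}.
  move=> x y; rewrite !inE /g /Eb => Ex Ey.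
  have [bx bx'] := e_bounds x; have [by_ by'] := e_bounds y.
  case Px: (PE n A (e1 x) (e2 x)); case Py: (PE n A (e1 y) (e2 y)); move/(congr1 val) => /= heq.
  - have h2 : e2 x = e2 y by exact: heq.
    apply: edge_eq => //; apply: (PE_uniq_l (L := A) (j := e2 x) Px); [by rewrite h2 | qlia | qlia].
  - have heq' : e2 x = e1 y by exact: heq.
    exfalso; rewrite Py /= in Ey; case/and3P: Ey => /orP [/eqP y1|cy] _ _; first qlia.
    move: cy; rewrite /compl => /andP [hr nA].
    case/and3P: Px => _ /orP [/eqP xn|hA] _; first qlia.
    by move: nA; rewrite -heq' hA.
  - have heq' : e1 x = e2 y by exact: heq.
    exfalso; rewrite Px /= in Ex; case/and3P: Ex => /orP [/eqP x1|cx] _ _; first qlia.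
    move: cx; rewrite /compl => /andP [hr nA].
    case/and3P: Py => _ /orP [/eqP yn|hA] _; first qlia.
    by move: nA; rewrite heq' hA.
  - rewrite Px /= in Ex; rewrite Py /= in Ey.
    have h1 : e1 x = e1 y by exact: heq.
    apply: edge_eq => //; apply: (PE_uniq_r (L := compl n A) (i := e1 x) Ex); [by rewrite h1 | qlia | qlia].
have img : [set g x | x in [pred e : edge n | Eb n A (e1 e) (e2 e)]] = [set~ ord0].
  apply/setP => x; rewrite !inE; apply/imsetP/idP.
    case=> e _ ->; have [b1 b2] := e_bounds e; rewrite /g; case: (PE _ _ _ _).
      by apply/eqP => /(congr1 val) h; have : e2 e = 0 := h; qlia.
    by apply/eqP => /(congr1 val) h; have : e1 e = 0 := h; qlia.
  case: x => m hm x0.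
  have hx0 : 0 < m by case: m hm x0.
  have hxn : m <= n by have := hm; rewrite ltnS.
  case hAx: ((m == n) || A m).
    have hx1 : 1 < m by case/orP: hAx => [/eqP ->|/okA]; qlia.
    have [u [hu1 hu2 hu3]] := pred_ex A hx1.
    have hPE : PE n A u m by apply: PE_intro.
    have hu0 : 0 < u by qlia.
    have hux : u < m by qlia.
    exists (mk_edge hu0 hux hxn); first by rewrite inE /Eb mk_edge_e1 mk_edge_e2 hPE.
    by rewrite /g mk_edge_e1 mk_edge_e2 hPE; apply: val_inj.
  have hxlt : m < n by move: hAx; case: (ltngtP m n) => //; qlia.
  have [w [hw1 hw2 hw3]] := succ_ex (compl n A) hxlt.
  have hC : PE n (compl n A) m w.
    apply: PE_intro => //; case: (m =P 1) => //= /eqP x1.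
    rewrite /compl; move: hAx => /norP [_ ->]; rewrite andbT; qlia.
  have hxw : m < w by qlia.
  have hw : w <= n by qlia.
  exists (mk_edge hx0 hxw hw); first by rewrite inE /Eb mk_edge_e1 mk_edge_e2 hC orbT.
  rewrite /g mk_edge_e1 mk_edge_e2.
  case hA: (PE n A m w); last by apply: val_inj.
  exfalso.
  have x1 : m = 1.
    by case/and3P: hA => /orP [/eqP //|hA'] _ _; move: hAx; rewrite hA' orbT.
  have wn : w = n.
    case/and3P: hA => _ /orP [/eqP //|Aw] _.
    by case/and3P: hC => _ /orP [/eqP //|]; rewrite /compl Aw andbF.
  have := PE_between hA (m := 2); have := PE_between hC (m := 2).
  rewrite x1 wn /compl => h1 h2; have h3 : 1 < 2 < n by qlia.
  by move: (h1 h3) (h2 h3); rewrite h3; case: (A 2).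
rewrite -(card_in_imset ginj) img cardsC1 card_ord //.
Qed.


Definition matchp (i j : nat) (uv : nat * nat) : bool :=
  ((uv.1 == i) && (uv.2 == j)) || ((uv.1 == j) && (uv.2 == i)).
Definition consb (s : seq nat) (i j : nat) : bool :=
  [&& i \in s, j \in s & all (fun m => ~~ (i < m < j)) s].

Lemma PE_ext n (L L' : pred nat) i j : L =1 L' -> PE n L i j = PE n L' i j.
Proof.
move=> h; rewrite /PE !h; congr (_ && (_ && _)); apply: eq_all => m /=; by rewrite h.
Qed.

Lemma consb_step x y S i j : x < y -> all (fun m => y < m) S -> i < j ->
  matchp i j (x, y) || consb (y :: S) i j = consb (x :: y :: S) i j.
Proof.
move=> hxy /allP hS hij; rewrite /matchp /consb /=.
apply/idP/idP.
  case/orP => [/orP [/andP [/eqP xi /eqP yj] | /andP [/eqP xj /eqP yi]] | /and4P [hi hj hy hS']]; last 2 first.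
  - lia.
  - have yi : y <= i.
      by move: hi; rewrite inE => /orP [/eqP ->|/hS]; lia.
    rewrite !inE in hi hj *; rewrite hi hj hy hS' !orbT /= andbT; lia.
  subst x y; rewrite !inE !eqxx !orbT /=; apply/and3P; split; [lia|lia|].
  by apply/allP => m hm; have := hS _ hm; lia.
case/and5P => hi hj hx hy hS'; rewrite !inE in hi hj.
case: (x =P i) => [xi|/eqP nxi].
  subst x; case: (y =P j) => [->|/eqP nyj]; first by [].
  exfalso; case/orP: hj => [/eqP|/orP [/eqP|jS]]; [lia|lia|].
  by have := hS _ jS; move: hy; lia.
have hi' : (i == y) || (i \in S) by move: hi; rewrite (eq_sym i x) (negbTE nxi).
have yi : y <= i by case/orP: hi' => [/eqP ->|/hS]; lia.
have hj' : (j == y) || (j \in S) by case/orP: hj => [/eqP|//]; lia.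
apply/orP; right; rewrite !inE hi' hj' /=; apply/andP; split=> //.
Qed.

Lemma zip_chain x l z i j : path ltn x (rcons l z) -> i < j ->
  has (matchp i j) (zip (x :: l) (rcons l z)) = consb (x :: rcons l z) i j.
Proof.
elim: l x => [|y l IH] x /=.
  move=> /andP [hxz _] hij; rewrite orbF -(consb_step hxz) //.
  rewrite /consb !inE; case: (i =P z) => [iz|]; last by rewrite orbF.
  by case: (j =P z) => //; qlia.
move=> /andP [hxy hp] hij; rewrite IH //.
have := consb_step (S := rcons l z) hxy _ hij; apply.
by move: hp; rewrite (path_sortedE ltn_trans) => /andP [].
Qed.

Lemma has_zip_swap p (s t : seq nat) :
  (forall u v, p (u, v) = p (v, u)) -> has p (zip s t) = has p (zip t s).
Proof.
move=> hp; elim: s t => [|x s IH] [|y t] //=; by rewrite hp IH.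
Qed.

Lemma consb_PE n a i j : (forall k, k \in a -> 1 < k < n) -> 0 < i < j -> j <= n ->
  consb (1 :: rcons a n) i j = PE n (mem a) i j.
Proof.
move=> ha hij hj; rewrite /consb /PE.
have e1' : (i \in 1 :: rcons a n) = (i == 1) || (i \in a).
  by rewrite !inE mem_rcons inE; case: (i =P n) => [ein|_]; [exfalso; qlia|by []].
have e2' : (j \in 1 :: rcons a n) = (j == n) || (j \in a).
  by rewrite !inE mem_rcons inE; case: (j =P 1) => [ej|_]; [exfalso; qlia|rewrite /=].
rewrite e1' e2'; congr [&& _, _ & _].
rewrite /= all_rcons.
have h1 : ~~ (i < 1 < j) by qlia.
have h2 : ~~ (i < n < j) by qlia.
rewrite h1 h2 /=; apply/allP/allP => H m.
  rewrite mem_index_iota => hm /=; apply/negP => ma; have := H m ma; rewrite hm.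
  by [].
move=> ma; apply/negP => hm; have := H m; rewrite mem_index_iota hm => /(_ isT) /=.
by rewrite ma.
Qed.

Lemma pyr_facts n a b : is_pyramidal n a b ->
  (forall k, k \in a -> 1 < k < n) /\ (forall k, (k \in b) = (1 < k < n) && (k \notin a)).
Proof.
case=> _ _ hp.
have hu : uniq (pyr_seq n a b) by rewrite (perm_uniq hp) iota_uniq.
have hm : forall k, (k \in pyr_seq n a b) = (0 < k < n.+1).
  by move=> k; rewrite (perm_mem hp) mem_iota; congr (_ && _); rewrite add1n.
move: hu; rewrite /pyr_seq /= mem_cat negb_or cat_uniq => /andP [/andP [n1a n1nb]].
case/and3P => ua hdis /andP [nnb ub].
have n1a' : forall k, k \in a -> k != 1 by move=> k ka; apply/eqP => k1; subst k; rewrite ka in n1a.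
have nna : forall k, k \in a -> k != n.
  by move=> k ka; apply/eqP => kn; subst k; move/hasP: hdis; apply; exists n => //; rewrite inE eqxx.
have ab : forall k, k \in a -> k \notin b.
  by move=> k ka; apply/negP => kb; move/hasP: hdis; apply; exists k => //; rewrite inE kb orbT.
have ha : forall k, k \in a -> 1 < k < n.
  move=> k ka; have h : 0 < k < n.+1 by rewrite -hm /pyr_seq in_cons mem_cat ka !orbT.
  by have := n1a' _ ka; have := nna _ ka; move: h; qlia.
split=> // k; apply/idP/idP.
  move=> kb; have h : 0 < k < n.+1 by rewrite -hm /pyr_seq in_cons mem_cat in_cons kb !orbT.
  have k1 : k != 1 by apply/eqP => k1; subst k; move: n1nb; rewrite inE kb orbT.
  have kn : k != n by apply/eqP => kn; subst k; rewrite kb in nnb.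
  apply/andP; split; first by move: h k1 kn; qlia.
  by apply/negP => ka; move: (ab _ ka); rewrite kb.
case/andP => hk nka.
have : k \in pyr_seq n a b by rewrite hm; qlia.
rewrite /pyr_seq in_cons mem_cat in_cons (negbTE nka).
have -> : (k == 1) = false by apply/eqP; qlia.
have -> : (k == n) = false by apply/eqP; qlia.
by [].
Qed.

Lemma edge_in_pyr n a b (e : edge n) : is_pyramidal n a b ->
  edge_in (pyr_seq n a b) e = PE n (mem a) (e1 e) (e2 e) || PE n (mem b) (e1 e) (e2 e).
Proof.
move=> hpy; have [ha hb] := pyr_facts hpy.
have hb' : forall k, k \in b -> 1 < k < n by move=> k; rewrite hb => /andP [].
case: (hpy) => sa sb _.
have [hij hj] := e_bounds e.
have -> : edge_in (pyr_seq n a b) e = has (matchp (e1 e) (e2 e)) (cyc_pairs (pyr_seq n a b)) by [].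
rewrite /cyc_pairs /pyr_seq rot1_cons.
have -> : rcons (a ++ n :: b) 1 = rcons a n ++ rcons b 1 by rewrite -cats1 -catA cat_cons cats1 cat_rcons.
rewrite -cat_cons zip_cat ?size_rcons // has_cat.
have pathR : forall l, sorted ltn l -> (forall k, k \in l -> 1 < k < n) -> path ltn 1 (rcons l n).
  move=> l sl hl; rewrite rcons_path (path_sortedE ltn_trans) sl andbT; apply/andP; split.
    by apply/allP => k /hl; qlia.
  have : last 1 l \in 1 :: l by apply: mem_last.
  by rewrite inE => /orP [/eqP ->|/hl]; qlia.
congr (_ || _).
  rewrite zip_chain ?consb_PE //; first exact: pathR.
  by case/andP: hij.
rewrite -has_rev rev_zip ?size_rcons // rev_cons rev_rcons has_zip_swap; last first.
  by move=> u v; rewrite /matchp /=; case: (u == _); case: (v == _); case: (u == _); case: (v == _).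
have srb : sorted ltn (rev b) by rewrite rev_sorted.
have hrb : forall k, k \in rev b -> 1 < k < n by move=> k; rewrite mem_rev; apply: hb'.
rewrite zip_chain ?consb_PE //; last 2 first.
- exact: pathR.
- by case/andP: hij.
apply: PE_ext => k; exact: mem_rev.
Qed.


Lemma tour_A n a b : is_pyramidal n a b -> 2 \in a ->
  OKp n (fun k => k \in a) /\
  forall e : edge n, edge_in (pyr_seq n a b) e = Eb n (fun k => k \in a) (e1 e) (e2 e).
Proof.
move=> hpy h2; have [ha hb] := pyr_facts hpy; split; first exact: ha.
move=> e; rewrite edge_in_pyr // /Eb; congr (_ || _); apply: PE_ext => k.
by rewrite /compl /= -hb.
Qed.

Lemma tour_norm n s : 2 < n -> PT n s -> exists A : pred nat,
  [/\ OKp n A, A 2 & forall e : edge n, edge_in s e = Eb n A (e1 e) (e2 e)].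
Proof.
move=> hn [a [b [-> hpy]]]; have [ha hb] := pyr_facts hpy.
case h2: (2 \in a).
  have [okA hE] := tour_A hpy h2; by exists (fun k => k \in a).
have h2b : 2 \in b by rewrite hb h2 andbT; qlia.
exists (fun k => k \in b); split => //.
  by move=> k; rewrite hb => /andP [].
move=> e; rewrite edge_in_pyr // /Eb orbC; congr (_ || _); apply: PE_ext => k.
rewrite /compl /= hb; case ka: (k \in a) => /=; first by have := ha _ ka => ->.
by case: (1 < k < n).
Qed.

Lemma sum_ind (R : realFieldType) n (B : pred (edge n)) :
  (\sum_(e : edge n) (if B e then 1 else 0 : R))%R = ((#|[pred e | B e]|)%:R)%R.
Proof.
rewrite -sum1_card natr_sum [RHS]big_mkcond /=; apply: eq_bigr => e _.
by rewrite inE; case: (B e).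
Qed.

Theorem mainTheorem6 (R : realFieldType) (n : nat) : 4 <= n ->
  forall (bit : bool) (a b : seq nat),
    is_pyramidal n a b -> 2 \in a -> code_all n a bit ->
    forall y, PYRgen R n y -> y <> charvec R n (pyr_seq n a b) ->
      adjacent R n (PYRgen R n) (charvec R n (pyr_seq n a b)) y.
Proof.
move=> hn bit a b hpy h2a hcode y hy hneq.
have hn2 : 2 < n by qlia.
have [okP hPe] := tour_A hpy h2a.
set P : pred nat := fun k => k \in a.
have Vp : PYRgen R n (charvec R n (pyr_seq n a b)).
  by exists (pyr_seq n a b); split => //; exists a, b.
case: (hy) => s [hs ys]; subst y.
have [Y [okY Y2 hYe]] := tour_norm hn2 hs.
pose U (e : edge n) := Eb n P (e1 e) (e2 e) || Eb n Y (e1 e) (e2 e).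
pose c : {ffun edge n -> R} := [ffun e => if U e then 1%R else 0%R].
have dotc : forall s' Z, (forall e : edge n, edge_in s' e = Eb n Z (e1 e) (e2 e)) ->
    dotE c (charvec R n s') = ((#|[pred e : edge n | Eb n Z (e1 e) (e2 e) && U e]|)%:R)%R.
  move=> s' Z hZ; rewrite /dotE -sum_ind; apply: eq_bigr => e _.
  rewrite !ffunE hZ; case: (U e); case: (Eb _ _ _ _); rewrite ?mulr1 ?mulr0 ?mul0r //.
have cardU : forall Z, OKp n Z -> (forall e : edge n, Eb n Z (e1 e) (e2 e) -> U e) ->
    #|[pred e : edge n | Eb n Z (e1 e) (e2 e) && U e]| = n.
  move=> Z okZ hZ; transitivity #|[pred e : edge n | Eb n Z (e1 e) (e2 e)]|; last exact: count_edges.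
  apply: eq_card => e; rewrite !inE.
  by case E: (Eb _ _ _ _) => //=; rewrite hZ.
have dp : dotE c (charvec R n (pyr_seq n a b)) = (n%:R)%R.
  by rewrite (dotc _ P hPe) cardU // => e he; rewrite /U he.
have dy : dotE c (charvec R n s) = (n%:R)%R.
  by rewrite (dotc _ Y hYe) cardU // => e he; rewrite /U he orbT.
have le_all : forall Z, OKp n Z -> #|[pred e : edge n | Eb n Z (e1 e) (e2 e) && U e]| <= n.
  move=> Z okZ; apply: (@leq_trans #|[pred e : edge n | Eb n Z (e1 e) (e2 e)]|); last by rewrite count_edges.
  apply: subset_leq_card.
  by apply/subsetP => e; rewrite !inE => /andP [].
split=> //.
  by move=> h; apply: hneq; rewrite h.
exists c; split.
- by rewrite dp dy.
- move=> r [s' [hs' ->]]; have [Z [okZ Z2 hZe]] := tour_norm hn2 hs'.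
  by rewrite (dotc _ Z hZe) dp ler_nat le_all.
move=> r [s' [hs' ->]]; have [Z [okZ Z2 hZe]] := tour_norm hn2 hs'.
rewrite (dotc _ Z hZe) dp => /eqP; rewrite eqr_nat => /eqP hcard.
have hsub : forall e : edge n, Eb n Z (e1 e) (e2 e) -> U e.
  have := @subset_cardP _ [pred e : edge n | Eb n Z (e1 e) (e2 e) && U e]
     [pred e : edge n | Eb n Z (e1 e) (e2 e)].
  rewrite hcard count_edges // => /(_ erefl) /= H.
  have /H : [pred e : edge n | Eb n Z (e1 e) (e2 e) && U e] \subset [pred e | Eb n Z (e1 e) (e2 e)].
    by apply/subsetP => e; rewrite !inE => /andP [].
  by move=> Heq e he; have := Heq e; rewrite !inE he /= => ->.
have hE : forall i j, 0 < i < j -> j <= n -> Eb n Z i j -> Eb n P i j || Eb n Y i j.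
  move=> i j hij hj hZ; case/andP: hij => hi hij.
  by have := hsub (mk_edge hi hij hj); rewrite /U !mk_edge_e1 !mk_edge_e2; apply.
have hPbit : forall k, 2 < k < n -> P k = bit.
  move=> k hk; apply: hcode; qlia.
have P2 : P 2 by [].
have Eb_ext : forall L L', L =1 L' -> forall i j, Eb n L i j = Eb n L' i j.
  move=> L L' h i j; rewrite /Eb (PE_ext _ _ _ h); congr (_ || _); apply: PE_ext => k.
  by rewrite /compl h.
case: (comb (n := n) (A := Z) (Y := Y) (P := P) ltac:(qlia) okZ okY okP Z2 Y2 P2 hPbit hE) => hZ.
  exists 0%R; split; [exact: lexx | exact: ler01 | ].
  apply/ffunP => e; rewrite !ffunE subr0 mul1r mul0r addr0 hZe hPe (Eb_ext _ _ hZ) //.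
exists 1%R; split; [exact: ler01 | exact: lexx | ].
apply/ffunP => e; rewrite !ffunE subrr mul0r mul1r add0r hZe hYe (Eb_ext _ _ hZ) //.
Qed.
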